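(* Let $L$ be a finite unramified extension of $\mathbb Q_\ell$ with ring of integers $S$, and let $\nu$ be the valuation on $L$ normalized by $\nu(\ell)=1$. Let $T$ be a free $S$-module of finite rank $d$ and $x$ an $S$-linear endomorphism of $T$ whose reduction $\bar x$ on $T/\ell T$ is nilpotent. Let $Q(t)=\det(t-x\mid T\otimes_S L)\in S[t]$. Then the Newton polygon $\mathrm{Np}(Q)$ lies on or above the Young polygon $\mathrm{Hp}(x|T)$.
   Context: Young polygon: for a nilpotent $d\times d$ matrix (or endomorphism) $N$ over a field with Jordan block sizes $m_1\ge m_2\ge\dots\ge m_r$ (so $\sum m_j=d$), $\mathrm{Hp}(N)$ is the piecewise linear function on $[0,d]$ whose graph is the polygon with vertices $(\sum_{j=1}^i m_j,\, i)$, $0\le i\le r$; its slopes are $1/m_1\le\dots\le 1/m_r$. We write $\mathrm{Hp}(N)=(m_1,\dots,m_r)$. For $x$ an $S$-linear endomorphism of a free $S$-module $T$ inducing a nilpotent endomorphism of the $S/\ell S$-vector space $T/\ell T$, $\mathrm{Hp}(x|T)$ denotes the Young polygon of that induced endomorphism. Newton polygon: for $Q(t)=\sum_{i=0}^d Q_it^{d-i}$ monic of degree $d$ over $L$ (with $\nu(0)=+\infty$), $\mathrm{Np}(Q)$ is the largest convex function $\phi$ on $[0,d]$ with $\phi(i)\le \nu(Q_i)$ for all $0\le i\le d$ (the lower boundary of the convex hull of the points $(i,\nu(Q_i))$). ''$\mathrm{Np}(Q)$ lies on or above $\mathrm{Hp}(N)$'' means $\mathrm{Np}(Q)(s)\ge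 \mathrm{Hp}(N)(s)$ for all $s\in[0,d]$. *)

(* Defs.v *)
From HB Require Import structures.
From mathcomp Require Import all_boot all_order all_algebra.
Set Implicit Arguments. Unset Strict Implicit. Unset Printing Implicit Defensive.
Import Order.TTheory GRing.Theory Num.Theory.
Local Open Scope ring_scope.

(* The ring S = ring of integers of a finite unramified extension L of Q_l *)
(* is described axiomatically (Q_l is not available in MathComp):          *)
(* S is a complete discrete valuation ring of characteristic 0 whose        *)
(* maximal ideal is generated by l, with finite residue field k; red is     *)
(* the reduction map S -> k = S/lS.  By Cohen's structure theory these are  *)
(* exactly (up to isomorphism) the rings W(F_q) = O_L, L/Q_l unramified.    *)

(* [vals p a n] : a = p^n * u with u a unit, i.e. nu(a) = n where nu is the
   valuation with nu(p) = 1.  For a = 0 no n satisfies it (nu(0) = +oo). *)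
Definition vals (S : idomainType) (p a : S) (n : nat) : Prop :=
  exists2 u : S, u \is a GRing.unit & a = p ^+ n * u.

Definition dvd_pow (S : idomainType) (p a : S) (n : nat) : Prop :=
  exists c : S, a = p ^+ n * c.

Record unram_int_ring (S : idomainType) (l : nat) (k : finFieldType)
    (red : {rmorphism S -> k}) : Prop := {
  uir_prime : prime l;
  uir_char0 : forall n : nat, (n%:R : S) = 0 -> n = 0%N;
  uir_nonunit : (l%:R : S) \isn't a GRing.unit;
  uir_dvr : forall a : S, a != 0 -> exists n, vals (l%:R) a n;
  uir_complete : forall f : nat -> S,
      (forall n, dvd_pow (l%:R) (f n.+1 - f n) n) ->
      exists a : S, forall n, dvd_pow (l%:R) (a - f n) n;
  uir_red_surj : forall y : k, exists a : S, red a = y;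
  uir_red_ker : forall a : S, red a = 0 <-> dvd_pow (l%:R) a 1
}.

Definition psums (m : seq nat) : seq nat :=
  [seq sumn (take i m) | i <- iota 1 (size m)].

(* nilpotent Jordan matrix with blocks of sizes m (1's on the superdiagonal
   inside each block, 0 elsewhere) *)
Definition jordan_nil_mx (F : fieldType) (d : nat) (m : seq nat) : 'M[F]_d :=
  \matrix_(i < d, j < d)
     (((j : nat) == (i : nat).+1) && ((j : nat) \notin psums m))%:R.

Definition jordan_type (F : fieldType) (d : nat) (N : 'M[F]_d) (m : seq nat)
  : Prop :=
  [/\ sorted geq m, all (fun a => 0 < a)%N m, sumn m = d &
      exists2 P : 'M[F]_d, P \in unitmx & P *m N *m invmx P = @jordan_nil_mx F d m].

(* The Young polygon Hp = (m_1,...,m_r): the piecewise linear function with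
   vertices (m_1+...+m_i, i).  For s in [P_i, P_{i+1}] (P_i = m_1+..+m_i)
   this sum equals i + (s - P_i)/m_{i+1}. *)
Definition clamp01 (R : realFieldType) (v : R) : R := Num.min 1 (Num.max 0 v).

Definition Hp (R : realFieldType) (m : seq nat) (s : R) : R :=
  \sum_(j < size m)
     clamp01 ((s - (sumn (take j m))%:R) / (nth 0%N m j)%:R).

(* Newton polygon.  Q(t) = sum_i Q_i t^(d-i), so Q_i = Q`_(d-i).            *)
(* Np(Q) is the largest convex function on [0,d] with phi(i) <= nu(Q_i),    *)
(* i.e. pointwise the supremum of all such convex minorants.               *)
(* [Np_ge p Q d s h] says Np(Q)(s) >= h, i.e. sup_phi phi(s) >= h.          *)
Definition convex_on (R : realFieldType) (a b : R) (phi : R -> R) : Prop :=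
  forall x y t : R, a <= x <= b -> a <= y <= b -> 0 <= t <= 1 ->
    phi (t * x + (1 - t) * y) <= t * phi x + (1 - t) * phi y.

Definition Np_minorant (S : idomainType) (R : realFieldType) (p : S)
    (Q : {poly S}) (d : nat) (phi : R -> R) : Prop :=
  convex_on 0 d%:R phi /\
  (forall i : nat, (i <= d)%N -> forall n : nat,
      vals p Q`_(d - i) n -> phi i%:R <= n%:R).

Definition Np_ge (S : idomainType) (R : realFieldType) (p : S)
    (Q : {poly S}) (d : nat) (s h : R) : Prop :=
  forall eps : R, 0 < eps ->
    exists phi : R -> R, Np_minorant p Q d phi /\ h - eps < phi s.

(* Main.v *)
Require Import Defs.
From HB Require Import structures.
From mathcomp Require Import all_boot all_order all_algebra all_fingroup.
Set Implicit Arguments. Unset Strict Implicit. Unset Printing Implicit Defensive.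
Import Order.TTheory GRing.Theory Num.Theory.
Local Open Scope ring_scope.
Section Dvd.
Variable (S : idomainType) (p : S).

Lemma dvd_pow0 a : dvd_pow p a 0. Proof. by exists a; rewrite expr0 mul1r. Qed.
Lemma dvd_pow_zero n : dvd_pow p 0 n. Proof. by exists 0; rewrite mulr0. Qed.
Lemma dvd_pow_add a b n : dvd_pow p a n -> dvd_pow p b n -> dvd_pow p (a + b) n.
Proof. by move=> [c ->] [e ->]; exists (c + e); rewrite mulrDr. Qed.
Lemma dvd_pow_opp a n : dvd_pow p a n -> dvd_pow p (- a) n.
Proof. by move=> [c ->]; exists (- c); rewrite mulrN. Qed.
Lemma dvd_pow_mull c a n : dvd_pow p a n -> dvd_pow p (c * a) n.
Proof. by move=> [e ->]; exists (c * e); rewrite mulrCA. Qed.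
Lemma dvd_pow_mul a b n k : dvd_pow p a n -> dvd_pow p b k -> dvd_pow p (a * b) (n + k).
Proof. by move=> [c ->] [e ->]; exists (c * e); rewrite exprD mulrACA. Qed.
Lemma dvd_pow_le a n k : (k <= n)%N -> dvd_pow p a n -> dvd_pow p a k.
Proof.
move=> kn [c ->]; exists (p ^+ (n - k) * c).
by rewrite mulrA -exprD subnKC.
Qed.
Lemma dvd_pow_sum (I : Type) (r : seq I) (P : pred I) (F : I -> S) n :
  (forall i, P i -> dvd_pow p (F i) n) -> dvd_pow p (\sum_(i <- r | P i) F i) n.
Proof.
move=> H; elim/big_rec: _ => [|i x Pi Hx]; first exact: dvd_pow_zero.
exact: dvd_pow_add (H _ Pi) Hx.
Qed.
Lemma dvd_pow_prod (I : Type) (r : seq I) (P : pred I) (F : I -> S) (w : I -> nat) :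
  (forall i, P i -> dvd_pow p (F i) (w i)) ->
  dvd_pow p (\prod_(i <- r | P i) F i) (\sum_(i <- r | P i) w i).
Proof.
move=> H; elim/big_rec2: _ => [|i n x Pi Hx]; first exact: dvd_pow0.
exact: dvd_pow_mul (H _ Pi) Hx.
Qed.

Lemma vals_dvd_contra a n : p \isn't a GRing.unit -> p != 0 ->
  vals p a n -> dvd_pow p a n.+1 -> False.
Proof.
move=> pu p0 [u uu ->] [c]; rewrite exprS -mulrA mulrCA => /(mulfI (expf_neq0 n p0)) eu.
by move: uu; rewrite eu unitrM (negbTE pu).
Qed.
End Dvd.

Lemma coef_bound (S : idomainType) (p : S) d (y : 'M[S]_d) (bJ : 'I_d -> 'I_d -> bool) e N :
  (forall i j, ~~ bJ i j -> dvd_pow p (y i j) 1) ->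
  (forall (s : 'S_d) (F : {set 'I_d}), #|F| = e -> (forall k, k \in F -> s k = k) ->
      (N <= \sum_(k < d) ((k \notin F) && ~~ bJ k (s k)))%N) ->
  dvd_pow p (char_poly y)`_e N.
Proof.
move=> hy hc; rewrite /char_poly /determinant coef_sum.
apply: dvd_pow_sum => s _.
have eqc i : char_poly_mx y i (s i) = ((i == s i)%:R)%:P * 'X + (- y i (s i))%:P.
  rewrite !mxE polyCN; case: (i == s i); by rewrite ?mul1r ?mul0r ?add0r.
rewrite (eq_bigr _ (fun i _ => eqc i)) bigA_distr.
have hsg (q : {poly S}) : dvd_pow p q`_e N -> dvd_pow p ((-1) ^+ s * q)`_e N.
  by case: (odd_perm s); rewrite ?expr1 ?expr0 ?mulN1r ?mul1r ?coefN //; apply: dvd_pow_opp.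
apply: hsg; rewrite coef_sum; apply: dvd_pow_sum => J _.
set c := fun i => if i \in J then ((i == s i)%:R : S) else - y i (s i).
have -> : \prod_i (if i \in J then ((i == s i)%:R)%:P * 'X else (- y i (s i))%:P)
     = (\prod_i c i)%:P * 'X ^+ #|J|.
  transitivity (\prod_i ((c i)%:P * (if i \in J then 'X else 1))).
    by apply: eq_bigr => i _; rewrite /c; case: (i \in J); rewrite ?mulr1.
  by rewrite big_split /= rmorph_prod -big_mkcond /= prodr_const.
rewrite coefCM coefXn; case: eqP => [He|]; last by move=> _; rewrite mulr0n mulr0; apply: dvd_pow_zero.
rewrite mulr1n mulr1.
have [fixJ|nfix] := boolP [forall k in J, s k == k]; last first.
  move: nfix; rewrite negb_forall_in => /existsP [k /andP [kJ sk]].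
  rewrite (bigD1 k) //= /c kJ eq_sym (negbTE sk) mul0r; exact: dvd_pow_zero.
apply: (dvd_pow_le (hc s J (esym He) _)).
  by move=> k kJ; apply/eqP; move/forall_inP: fixJ; apply.
apply: dvd_pow_prod => i _; rewrite /c.
case: (boolP (i \in J)) => iJ /=; first exact: dvd_pow0.
case: (boolP (bJ i (s i))) => b /=; first exact: dvd_pow0.
exact/dvd_pow_opp/hy.
Qed.
Definition Pn (m : seq nat) (b : nat) : nat := sumn (take b m).

Lemma Pn0 m : Pn m 0 = 0%N. Proof. by rewrite /Pn take0. Qed.
Lemma Pn_size m : Pn m (size m) = sumn m. Proof. by rewrite /Pn take_size. Qed.
Lemma PnS m b : (b < size m)%N -> Pn m b.+1 = (Pn m b + nth 0%N m b)%N.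
Proof. by move=> bm; rewrite /Pn (take_nth 0%N bm) sumn_rcons. Qed.
Lemma Pn_le m b : (Pn m b <= Pn m b.+1)%N.
Proof.
case: (ltnP b (size m)) => bm; first by rewrite PnS // leq_addr.
by rewrite /Pn !take_oversize // ltnW.
Qed.
Lemma Pn_mono m b c : (b <= c)%N -> (Pn m b <= Pn m c)%N.
Proof.
move=> /subnK <-; elim: (c - b)%N => // n IH.
by rewrite addSn (leq_trans IH (Pn_le _ _)).
Qed.
Lemma Pn_psums m b : (b < size m)%N -> Pn m b.+1 \in psums m.
Proof.
move=> bm; apply/mapP; exists b.+1 => //.
by rewrite mem_iota add1n !ltnS bm.
Qed.

Lemma sum_blocks (g : nat -> nat) m :
  (\sum_(0 <= k < sumn m) g k =
   \sum_(0 <= b < size m) \sum_(Pn m b <= k < Pn m b.+1) g k)%N.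
Proof.
have H c : (\sum_(0 <= k < Pn m c) g k =
   \sum_(0 <= b < c) \sum_(Pn m b <= k < Pn m b.+1) g k)%N.
  elim: c => [|c IH]; first by rewrite Pn0 !big_geq.
  by rewrite big_nat_recr //= -IH -big_cat_nat ?Pn_le.
by rewrite -Pn_size H.
Qed.

Lemma runs_le (f : nat -> bool) o n :
  (\sum_(o <= k < o + n) (f k && f k.+1) + (0 < \sum_(o <= k < o + n.+1) f k)
    <= \sum_(o <= k < o + n.+1) f k)%N.
Proof.
elim: n => [|n IH].
  by rewrite addn0 big_geq // add0n; case: (\sum_(_ <= _ < _) _)%N.
rewrite !addnS in IH *.
rewrite big_nat_recr ?leq_addr //= (big_nat_recr (o + n).+1) ?leqW ?leq_addr //=.
move: IH; set A := (\sum_(o <= k < (o + n).+1) f k)%N.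
set H := (\sum_(o <= k < o + n) (f k && f k.+1))%N => IH.
case fn1: (f (o + n).+1); last by rewrite !andbF !addn0.
rewrite andbT addn1 ltn0Sn addn1 ltnS.
case fn: (f (o + n)) IH; rewrite ?addn0 ?addn1 => IH.
  move: IH; rewrite /A big_nat_recr ?leq_addr //= fn addn1 ltn0Sn addn1 => IH.
  by apply: leq_trans IH; rewrite -addn1 leq_add2l ltn0Sn.
exact: leq_trans (leq_addr _ _) IH.
Qed.

Lemma block_le (f : nat -> bool) m b : (b < size m)%N -> (0 < nth 0%N m b)%N ->
  let a := (\sum_(Pn m b <= k < Pn m b.+1) f k)%N in
  let g := (\sum_(Pn m b <= k < Pn m b.+1) (f k && f k.+1 && (k.+1 \notin psums m)))%N in
  (g + (0 < a) <= a)%N /\ (a <= nth 0%N m b)%N.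
Proof.
move=> bm; rewrite (PnS bm); case E: (nth 0%N m b) => [//|n] _ a g.
split; last first.
  apply: (@leq_trans (\sum_(Pn m b <= k < Pn m b + n.+1) 1)%N).
    by apply: leq_sum => i _; exact: leq_b1.
  by rewrite sum_nat_const_nat addKn muln1.
apply: leq_trans (runs_le f (Pn m b) n); rewrite leq_add2r /g.
rewrite addnS big_nat_recr ?leq_addr //=.
have -> : ((Pn m b + n).+1 \notin psums m) = false.
  by rewrite -addnS -E -(PnS bm) Pn_psums.
rewrite andbF addn0; apply: leq_sum => i _.
by case: (f i); case: (f i.+1); case: (_ \notin _).
Qed.

Lemma block_real (R : realFieldType) (a g mb : nat) (mu : R) :
  (g + (0 < a) <= a)%N -> (a <= mb)%N -> 0 < mu ->
  a%:R / mu + Num.min 0 (1 - mb%:R / mu) <= a%:R - g%:R.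
Proof.
move=> ga amb mu0.
case: (posnP a) ga => [-> | a0]; rewrite ?addn0 ?addn1.
  rewrite leqn0 => /eqP ->; rewrite subrr mul0r add0r.
  by rewrite ge_min lexx.
move=> ga.
have h1 : 1 <= a%:R - g%:R :> R.
  by rewrite lerBrDr addrC natr1 ler_nat.
apply: le_trans h1.
have hm : Num.min 0 (1 - mb%:R / mu) <= 1 - mb%:R / mu by rewrite ge_min lexx orbT.
apply: le_trans (lerD (lexx _) hm) _.
rewrite addrCA gerDl subr_le0 ler_pM2r ?invr_gt0 // ler_nat.
exact: amb.
Qed.

Lemma comb_ineq (R : realFieldType) (m : seq nat) (f : nat -> bool) (mu : R) :
  all (fun a => 0 < a)%N m -> 0 < mu ->
  (\sum_(0 <= k < sumn m) f k)%N%:R / mu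
    + \sum_(0 <= b < size m) Num.min 0 (1 - (nth 0%N m b)%:R / mu)
  <= (\sum_(0 <= k < sumn m) f k)%N%:R
     - (\sum_(0 <= k < sumn m) (f k && f k.+1 && (k.+1 \notin psums m)))%N%:R.
Proof.
move=> /(all_nthP 0%N) mpos mu0.
rewrite !sum_blocks !natr_sum mulr_suml -big_split -sumrB /=.
rewrite !big_mkord; apply: ler_sum => b _.
have [h1 h2] := block_le f (ltn_ord b) (mpos _ (ltn_ord b)).
exact: block_real h1 h2 mu0.
Qed.

Lemma minorant_vals (S : idomainType) (p : S) (m : seq nat) (y : 'M[S]_(sumn m))
  (R : realFieldType) (mu : R) :
  p \isn't a GRing.unit -> p != 0 -> all (fun a => 0 < a)%N m -> 0 < mu ->
  (forall i j : 'I_(sumn m), ~~ ((j == i.+1 :> nat) && ((j : nat) \notin psums m)) ->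
      dvd_pow p (y i j) 1) ->
  forall i : nat, (i <= sumn m)%N -> forall n : nat,
    vals p (char_poly y)`_(sumn m - i) n ->
    i%:R / mu + \sum_(0 <= b < size m) Num.min 0 (1 - (nth 0%N m b)%:R / mu) <= n%:R.
Proof.
move=> pu p0 mpos mu0 hy i id n hv.
set d := sumn m in y hy id hv *.
case: leP => // hlt; exfalso.
apply: (vals_dvd_contra pu p0 hv).
apply: (@coef_bound _ _ _ _ (fun i j : 'I_d => (j == i.+1 :> nat) && ((j : nat) \notin psums m)) _ _ hy) => s F cF fixF.
pose f (k : nat) := [exists k' : 'I_d, (val k' == k) && (k' \notin F)].
have fE (k : 'I_d) : f k = (k \notin F).
  apply/existsP/idP => [[k' /andP [/eqP /val_inj -> //]] | kF].
  by exists k; rewrite eqxx.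
set c := (\sum_(k < d) ((k \notin F) && ~~ ((s k == k.+1 :> nat) && ((s k : nat) \notin psums m))))%N.
set G := (\sum_(0 <= k < d) (f k && f k.+1 && (k.+1 \notin psums m)))%N.
have hA : (\sum_(0 <= k < d) f k)%N = i.
  rewrite big_mkord (eq_bigr (fun k => (k \notin F : nat))); last by move=> k _; rewrite fE.
  have := cardC (mem F); rewrite card_ord cF => hc.
  rewrite -(big_mkcond _ (fun _ => 1%N)) /= .
  move: hc => /(f_equal (fun z => z - (d - i))%N); rewrite addKn subKn // => <-.
  by rewrite sum1_card; apply: eq_card => z; rewrite !inE.
have hcG : (i <= c + G)%N.
  rewrite -hA /c /G !big_mkord -big_split /=; apply: leq_sum => k _.
  rewrite fE; case: (boolP (k \in F)) => //= kF.
  case: (boolP ((s k == k.+1 :> nat) && ((s k : nat) \notin psums m))) => //= /andP [/eqP sk ps].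
  suff -> : f k.+1 by rewrite -sk ps.
  apply/existsP; exists (s k); apply/andP; split; first by apply/eqP.
  apply/negP => skF; move: (fixF _ skF) => /perm_inj skk.
  by move: sk; rewrite skk => /eqP; rewrite eqn_leq ltnn andbF.
have := comb_ineq f mpos mu0; rewrite -/d hA -/G => hcomb.
have : (n < c)%N.
  rewrite -(ltr_nat R); apply: lt_le_trans hlt _; apply: le_trans hcomb _.
  by rewrite lerBlDr -natrD ler_nat.
by [].
Qed.

Section Terms.
Variable R : realFieldType.
Implicit Types P mb mu s : R.

Lemma clamp_le1 v : clamp01 v <= 1 :> R.
Proof. by rewrite /clamp01 ge_min lexx. Qed.
Lemma clamp_le v : 0 <= v -> clamp01 v <= v :> R.
Proof. by move=> v0; rewrite /clamp01 (max_r v0) ge_min lexx orbT. Qed.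
Lemma clamp_0 v : v <= 0 -> clamp01 v = 0 :> R.
Proof. by move=> v0; rewrite /clamp01 (max_l v0) min_r. Qed.

Lemma term_a P mb mu s : 0 < mb -> 0 < mu -> mu <= mb -> P + mb <= s ->
  clamp01 ((s - P) / mb) <=
  (Num.min (P + mb) s - Num.min P s) / mu + Num.min 0 (1 - mb / mu).
Proof.
move=> mb0 mu0 mumb Ps.
have Ps' : P <= s by apply: le_trans Ps; rewrite lerDl ltW.
rewrite (min_l Ps) (min_l Ps') addrAC subrr add0r min_r; last first.
  by rewrite subr_le0 ler_pdivlMr // mul1r.
by rewrite addrCA subrr addr0 clamp_le1.
Qed.

Lemma term_b P mu s : 0 < mu -> P <= s -> s <= P + mu ->
  clamp01 ((s - P) / mu) <=
  (Num.min (P + mu) s - Num.min P s) / mu + Num.min 0 (1 - mu / mu).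
Proof.
move=> mu0 Ps sP.
rewrite (min_r sP) (min_l Ps) divff ?gt_eqF // subrr min_l // addr0.
by apply: clamp_le; rewrite divr_ge0 ?subr_ge0 // ltW.
Qed.

Lemma term_c P mb mu s : 0 < mb -> 0 < mu -> mb <= mu -> s <= P ->
  clamp01 ((s - P) / mb) <=
  (Num.min (P + mb) s - Num.min P s) / mu + Num.min 0 (1 - mb / mu).
Proof.
move=> mb0 mu0 mbmu sP.
have sP' : s <= P + mb by apply: (le_trans sP); rewrite lerDl ltW.
rewrite (min_r sP) (min_r sP') subrr mul0r add0r min_l; last first.
  by rewrite subr_ge0 ler_pdivrMr // mul1r.
rewrite clamp_0 //; rewrite pmulr_lle0 ?invr_gt0 // subr_le0 //.
Qed.
End Terms.


Lemma Hp_le (R : realFieldType) (m : seq nat) (s : R) j :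
  sorted geq m -> all (fun a => 0 < a)%N m -> (j < size m)%N ->
  (Pn m j)%:R <= s -> s <= (Pn m j.+1)%:R -> 0 <= s -> s <= (sumn m)%:R ->
  Hp m s <= s / (nth 0%N m j)%:R
     + \sum_(0 <= b < size m) Num.min 0 (1 - (nth 0%N m b)%:R / (nth 0%N m j)%:R).
Proof.
move=> srt /(all_nthP 0%N) mpos jm Pjs sPj s0 sd.
set mu : R := (nth 0%N m j)%:R.
have mu0 : 0 < mu by rewrite ltr0n mpos.
have hs : s = \sum_(0 <= b < size m)
    (Num.min (Pn m b.+1)%:R s - Num.min (Pn m b)%:R s).
  rewrite telescope_sumr // Pn_size Pn0 (min_r sd) min_l // subr0.
  done.
rewrite {2}hs mulr_suml -big_split /= /Hp big_mkord.
apply: ler_sum => b _.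
have bm := ltn_ord b.
have nth_ge (u v : nat) : (u <= v)%N -> (v < size m)%N -> (nth 0%N m v <= nth 0%N m u)%N.
  move=> uv vm.
  have gtr : transitive geq by move=> a0 b0 c0 h1 h2; exact: leq_trans h2 h1.
  apply: (sorted_leq_nth gtr (fun a => leqnn a) 0%N srt) => //.
  by rewrite inE (leq_ltn_trans uv vm).
rewrite (PnS bm) natrD -/(Pn m b).
have mb0 : (0 : R) < (nth 0%N m b)%:R by rewrite ltr0n mpos.
case: (ltngtP b j) => [bj|jb|bj].
- apply: term_a => //; first by rewrite ler_nat nth_ge // ltnW.
  apply: le_trans Pjs; rewrite -natrD -PnS // ler_nat Pn_mono //.
- apply: term_c => //; first by rewrite ler_nat nth_ge // ltnW.
  by apply: (le_trans sPj); rewrite ler_nat Pn_mono.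
- rewrite /mu -bj in mu0 Pjs sPj *; apply: term_b => //.
  by rewrite -natrD -PnS.
Qed.

Lemma exists_seg (R : realFieldType) (m : seq nat) (s : R) :
  (0 < size m)%N -> 0 <= s -> s <= (sumn m)%:R ->
  exists2 j, (j < size m)%N & (Pn m j)%:R <= s <= (Pn m j.+1)%:R.
Proof.
move=> m0 s0 sd.
pose P := fun b => (b < size m)%N && ((Pn m b)%:R <= s).
have exP : exists b, P b by exists 0%N; rewrite /P m0 Pn0.
have ubP : forall b, P b -> (b <= size m)%N by move=> b /andP [/ltnW].
case: (ex_maxnP exP ubP) => j /andP [jm Pjs] jmax.
exists j => //; rewrite Pjs /=.
case: (ltnP j.+1 (size m)) => j1.
  rewrite leNgt; apply/negP => h.
  by have := jmax j.+1; rewrite /P j1 (ltW h) => /(_ isT); rewrite ltnn.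
have -> : j.+1 = size m by apply/eqP; rewrite eqn_leq j1 jm.
by rewrite Pn_size.
Qed.

Lemma char_poly_conj (R : comUnitRingType) n (A x : 'M[R]_n) : A \in unitmx ->
  char_poly (A *m x *m invmx A) = char_poly x.
Proof.
move=> Au; rewrite /char_poly.
have -> : char_poly_mx (A *m x *m invmx A) =
    map_mx polyC A *m char_poly_mx x *m map_mx polyC (invmx A).
  rewrite /char_poly_mx mulmxBr mulmxBl -!map_mxM.
  rewrite mul_mx_scalar -scalemxAl -map_mxM mulmxV // map_mx1.
  by rewrite scalemx1.
rewrite !det_mulmx mulrAC -det_mulmx -map_mxM mulmxV // map_mx1 det1.
by rewrite mul1r.
Qed.

Lemma affine_eq (R : realFieldType) (a c t x y : R) :
  (t * x + (1 - t) * y) * a + c = t * (x * a + c) + (1 - t) * (y * a + c).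
Proof.
rewrite !mulrDr mulrDl !mulrA addrACA -mulrDl.
by rewrite -mulrDl [t + _]addrC subrK mul1r.
Qed.

Lemma red_unit (S : idomainType) l (k : finFieldType) (red : {rmorphism S -> k})
  (hS : unram_int_ring l red) (a : S) : red a != 0 -> a \is a GRing.unit.
Proof.
move=> ra; have a0 : a != 0 by apply: contraNneq ra => ->; rewrite rmorph0.
have [n [u uu ea]] := uir_dvr hS a0.
case: n ea => [|n] ea; first by rewrite ea expr0 mul1r.
exfalso; move/negP: ra; apply; apply/eqP; apply/(uir_red_ker hS).
by exists ((l%:R) ^+ n * u); rewrite ea exprS expr1 mulrA.
Qed.

Theorem mainTheorem2 (S : idomainType) (l : nat) (k : finFieldType)
    (red : {rmorphism S -> k}) (hS : unram_int_ring l red)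
    (d : nat) (x : 'M[S]_d)
    (hnil : exists n : nat, (map_mx red x) ^+ n = 0)
    (R : realFieldType) (m : seq nat) (hm : jordan_type (map_mx red x) m)
    (s : R) (hs : 0 <= s <= d%:R) :
  Np_ge (l%:R : S) (char_poly x) d s (Hp m s).
Proof.
have hS' := hS; case: hS => lpr char0 nonu dvr compl rsurj rker.
have p0 : (l%:R : S) != 0 by apply/eqP => /char0 l0; rewrite l0 in lpr.
case: hm => srt mpos sumd [P Pu PJ].
subst d.
have [lift liftK] : exists lift : k -> S, forall z, red (lift z) = z.
  have hex z : exists a, red a == z by have [a ha] := rsurj z; exists a; apply/eqP.
  by exists (fun z => xchoose (hex z)) => z; apply/eqP; exact: (xchooseP (hex z)).
set Pt := map_mx lift P.
have PtE : map_mx red Pt = P by apply/matrixP => i j; rewrite !mxE liftK.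
have Ptu : Pt \in unitmx.
  rewrite unitmxE; apply: (red_unit hS'); rewrite -det_map_mx PtE.
  by rewrite -unitfE -unitmxE.
set y := Pt *m x *m invmx Pt.
have hQ : char_poly y = char_poly x by exact: char_poly_conj.
have invE : map_mx red (invmx Pt) = invmx P.
  have h1 : map_mx red (invmx Pt) *m P = 1%:M.
    by rewrite -PtE -map_mxM mulVmx // map_mx1.
  by rewrite -[LHS]mul1mx -(mulVmx Pu) -mulmxA (mulmx1C h1) mulmx1.
have yE : map_mx red y = jordan_nil_mx k (sumn m) m by rewrite !map_mxM PtE invE.
have hy : forall i j : 'I_(sumn m),
    ~~ ((j == i.+1 :> nat) && ((j : nat) \notin psums m)) -> dvd_pow (l%:R) (y i j) 1.
  move=> i j hb; apply/rker.
  move: (congr1 (fun M : 'M[k]_(sumn m) => M i j) yE); rewrite !mxE (negbTE hb) /= => ->.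
  by rewrite mulr0n.
case/andP: hs => s0 sd.
suff [mu mu0 hle] : exists2 mu : R, 0 < mu & Hp m s <= s / mu
     + \sum_(0 <= b < size m) Num.min 0 (1 - (nth 0%N m b)%:R / mu).
  move=> eps eps0.
  exists (fun t => t / mu + \sum_(0 <= b < size m) Num.min 0 (1 - (nth 0%N m b)%:R / mu)).
  split; last by apply: lt_le_trans hle; rewrite ltrBlDr ltrDl.
  split.
    by move=> a b t _ _ _; rewrite /= affine_eq.
  rewrite -hQ => i hi n hv.
  exact: (minorant_vals nonu p0 mpos mu0 hy hi hv).
case: (posnP (size m)) => [m0|m0].
  exists 1 => //; move/eqP: m0; rewrite size_eq0 => /eqP m0.
  by rewrite m0 /Hp /= big_ord0 big_geq // addr0 divr1.
have [j jm /andP [h1 h2]] := exists_seg m0 s0 sd.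
exists (nth 0%N m j)%:R; first by rewrite ltr0n; exact: (all_nthP 0%N mpos).
exact: Hp_le.
Qed.
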